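(* Let $p$ be an odd prime and $q\ge1$ an integer. Let $m,k$ be nonnegative integers and $r,s$ integers with $r\ge s\ge q$ and $kp^s\le mp^r$. Let $e_0=v_p\!\left(\binom{mp^r}{kp^s}\right)$ be the exponent of $p$ dividing $\binom{mp^r}{kp^s}$. Then $$\frac{1}{p^{e_0}}\binom{mp^r}{kp^s}\equiv\frac{1}{p^{e_0}}\binom{mp^{r-1}}{kp^{s-1}}\pmod{p^q}$$ (as a congruence in the $p$-adic integers).
   Context: $v_p$ denotes the $p$-adic valuation. *)

(* Defs.v *)
From mathcomp Require Import all_boot.

(* Main.v *)
Require Import Defs.
From mathcomp Require Import all_boot all_algebra.
From mathcomp Require Import ring.

Lemma L1 X Y t : 'C(X + t, Y + t) * \prod_(i < t) (Y + i.+1) =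
  'C(X, Y) * \prod_(i < t) (X + i.+1).
Proof.
elim: t => [|t IH]; first by rewrite !addn0 !big_ord0.
rewrite !big_ord_recr /= mulnA.
have H := mul_bin_diag (X + t).+1 (Y + t).
rewrite /= in H.
rewrite !addnS mulnAC [_ * (Y + t).+1]mulnC -H -mulnA IH.
by rewrite mulnC -mulnA.
Qed.

Lemma prod_congr_mod d n (F G : 'I_n -> nat) :
  (forall i, F i = G i %[mod d]) -> \prod_(i < n) F i = \prod_(i < n) G i %[mod d].
Proof.
move=> H; elim: n F G H => [|n IH] F G H; first by rewrite !big_ord0.
rewrite !big_ord_recr /= -modnMm (IH (fun i => F (widen_ord (leqnSn n) i))
   (fun i => G (widen_ord (leqnSn n) i))) // H modnMm //.
Qed.

Lemma coprime_prod p n (F : 'I_n -> nat) :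
  (forall i, coprime p (F i)) -> coprime p (\prod_(i < n) F i).
Proof.
move=> H; apply: (big_ind (fun x => coprime p x)) => //.
- exact: coprimen1.
- by move=> x y hx hy; rewrite coprimeMr hx hy.
Qed.

Definition G p x b := \prod_(u < b) \prod_(i < p.-1) (x + (p * u + i.+1)).

Lemma GS p x b : G p x b.+1 = G p x b * \prod_(i < p.-1) (x + (p * b + i.+1)).
Proof. by rewrite /G big_ord_recr. Qed.

Lemma L2 p c b : 0 < p ->
  'C(p * c + p * b, p * b) * G p 0 b = 'C(c + b, b) * G p (p * c) b.
Proof.
case: p => // p' _.
elim: b => [|b IH]; first by rewrite /G !big_ord0 !muln0 !addn0 !bin0.
have L := L1 (p'.+1 * c + p'.+1 * b) (p'.+1 * b) p'.+1.
rewrite !big_ord_recr /= in L.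
have B := mul_bin_diag (c + b).+1 b. rewrite /= in B.
rewrite !GS /=.
under eq_bigr do rewrite add0n.
under [X in _ = _ * (_ * X)]eq_bigr do rewrite addnA.
have E: p'.+1 * b.+1 = p'.+1*b + p'.+1 by rewrite mulnS addnC.
rewrite E addnA [c + b.+1]addnS.
set A := 'C(_ + p'.+1, _) in L *.
set P0 := \prod_(i < p') _ in L *.
set P1 := \prod_(i < p') _ in L *.
set C0 := 'C(_, _) in L IH.
apply/eqP; rewrite -(eqn_pmul2r (_ : 0 < p'.+1*b.+1)) ?muln_gt0 //; apply/eqP.
transitivity (A * (P0 * (p'.+1 * b + p'.+1)) * G p'.+1 0 b); first by rewrite -E; ring.
rewrite L.
have E2: p'.+1 * c + p'.+1 * b + p'.+1 = p'.+1 * (c + b).+1 by ring.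
rewrite E2.
transitivity (C0 * G p'.+1 0 b * P1 * p'.+1 * (c + b).+1); first by ring.
rewrite IH.
transitivity ((c + b).+1 * 'C(c + b, b) * G p'.+1 (p'.+1 * c) b * P1 * p'.+1); first by ring.
rewrite B; ring.
Qed.

Lemma L3 p x b d : d %| x -> G p x b = G p 0 b %[mod d].
Proof.
move=> dx; rewrite /G; apply: prod_congr_mod => u; apply: prod_congr_mod => i.
by rewrite add0n -modnDml (eqP dx) add0n.
Qed.

Lemma L4 p x b : prime p -> p %| x -> coprime p (G p x b).
Proof.
move=> pp px; apply: coprime_prod => u; apply: coprime_prod => i.
rewrite -coprime_modr -modnDml (eqP px) add0n mulnC -modnDml modnMl add0n.
have hi : i.+1 < p by have := ltn_ord i; have := prime_gt0 pp; case: (p) i => //.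
rewrite modn_small // prime_coprime // gtnNdvd //.
Qed.

Lemma Fin p q C1 C0 J J' : prime p -> 0 < C1 -> 0 < C0 ->
  coprime p J -> coprime p J' -> C1 * J = C0 * J' -> J' = J %[mod p ^ q] ->
  C1 %/ p ^ (logn p C1) = C0 %/ p ^ (logn p C1) %[mod p ^ q].
Proof.
move=> pp C1p C0p cJ cJ' E HJ.
have J0 : 0 < J by case: J cJ {E HJ} => //; rewrite /coprime gcdn0 => /eqP p1; move: pp; rewrite p1.
have J0' : 0 < J' by case: J' cJ' {E HJ} => //; rewrite /coprime gcdn0 => /eqP p1; move: pp; rewrite p1.
have El : logn p C0 = logn p C1.
  have := congr1 (logn p) E.
  by rewrite !lognM // (logn_coprime cJ) (logn_coprime cJ') !addn0.
set e := logn p C1 in El *.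
have h1 := pfactor_dvdnn p C1; have h0 := pfactor_dvdnn p C0.
rewrite El -/e in h0.
set u := C1 %/ p ^ e; set v := C0 %/ p ^ e.
have E1 : C1 = u * p ^ e by rewrite divnK.
have E0 : C0 = v * p ^ e by rewrite divnK.
have Euv : u * J = v * J'.
  have pe : 0 < p ^ e by rewrite expn_gt0 prime_gt0.
  apply/eqP; rewrite -(eqn_pmul2r pe); apply/eqP.
  by rewrite mulnAC -E1 E E0 mulnAC.
have H : u * J = v * J %[mod p ^ q] by rewrite Euv -modnMmr HJ modnMmr.
have cd : coprime (p ^ q) J by rewrite coprimeXl // coprime_sym.
apply/eqP; case: (leqP v u) => huv.
  rewrite eqn_mod_dvd //; move/eqP: H; rewrite eqn_mod_dvd ?leq_mul2r ?huv ?orbT //.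
  by rewrite -mulnBl Gauss_dvdl.
rewrite eq_sym eqn_mod_dvd; last exact: ltnW. move/eqP: H; rewrite eq_sym eqn_mod_dvd; last by rewrite leq_mul2r (ltnW huv) orbT.
by rewrite -mulnBl Gauss_dvdl.
Qed.

Theorem corollary15 (p q m k r s : nat) :
  prime p -> odd p -> 1 <= q -> q <= s -> s <= r ->
  k * p ^ s <= m * p ^ r ->
  let e0 := logn p 'C(m * p ^ r, k * p ^ s) in
  'C(m * p ^ r, k * p ^ s) %/ p ^ e0 =
    'C(m * p ^ r.-1, k * p ^ s.-1) %/ p ^ e0 %[mod p ^ q].
Proof.
move=> pp _ q1 qs sr Hle; cbv zeta.
have p0 := prime_gt0 pp.
have s0 : 0 < s by apply: leq_trans qs.
have r0 : 0 < r by apply: leq_trans sr.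
set a := m * p ^ r.-1; set b := k * p ^ s.-1.
have Er : m * p ^ r = p * a by rewrite /a -{1}(prednK r0) expnS mulnCA.
have Es : k * p ^ s = p * b by rewrite /b -{1}(prednK s0) expnS mulnCA.
rewrite Er Es in Hle *.
have ba : b <= a by rewrite -(leq_pmul2l p0).
set c := a - b.
have Eac : p * a = p * c + p * b by rewrite -mulnDr subnK.
have Eca : a = c + b by rewrite subnK.
rewrite Eac Eca.
apply: (Fin _ q _ _ _ _ pp _ _ (L4 p 0 b pp (dvdn0 p)) (L4 p (p * c) b pp (dvdn_mulr c (dvdnn p))) (L2 p c b p0)).
- by rewrite bin_gt0 leq_addl.
- by rewrite bin_gt0 leq_addl.
apply: L3.
have hs : p ^ s.-1 %| c by apply: dvdn_sub; [apply: dvdn_mull; apply: dvdn_exp2l; by rewrite -!subn1 leq_sub2r | apply: dvdn_mull].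
apply: dvdn_trans (_ : p ^ s %| p * c); first exact: dvdn_exp2l.
by rewrite -{1}(prednK s0) expnS dvdn_pmul2l.
Qed.
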